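(* Let $\beta>0$, $\tilde\lambda\in(0,1]$, $\mathcal{L}\ge0$, $x\ge0$, $z\ge0$, and portfolio weights $w^D,w^E\ge0$ with $w^D+w^E=1$, and set $y=-w^E\mathcal{L}$. For $\Delta>y$ let $p^D(\Delta)=x/(\Delta-y)$. If $$\Big(\tilde \lambda(x+z) - \beta\mathcal{L} w^D \Big)^2 < 4\beta \tilde\lambda \mathcal{L}xw^E,$$ then there is no $\Delta>y$ satisfying $\beta(\mathcal{L}+\Delta)\le\tilde\lambda\big(z+\Delta p^D(\Delta)\big)$.
   Context: Single period $t$ of a stablecoin market model. The stablecoin holder holds all $\mathcal{L}=\mathcal{L}_{t-1}$ outstanding stablecoins and Ether $\bar n_{t-1}$, and chooses weights $w^D$ (stablecoin) and $w^E=1-w^D$ (Ether); $x=w^D\bar n_{t-1}p^E_t$ is the new dollar stablecoin demand and $y=w^D\mathcal{L}-\mathcal{L}=-w^E\mathcal{L}$. The speculator, owing $\mathcal{L}$ stablecoins and holding Ether worth $z$ dollars, changes supply by $\Delta$; for $\Delta>y$ the market clears at price $p^D(\Delta)=x/(\Delta-y)$. Its leverage constraint (with liquidation threshold $\beta$ and leverage bound $\tilde\lambda$; $\tilde\lambda=1$ is the protocol's liquidation constraint) is $\beta(\mathcal{L}+\Delta)\le\tilde\lambda(z+\Delta p^D(\Delta))$. *)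

(* Defs.v *)
From Stdlib Require Import Reals.
Open Scope R_scope.

Definition pD (x y Delta : R) : R := x / (Delta - y).

(* Main.v *)
Require Import Defs.
From Stdlib Require Import Reals Lra Psatz.
Open Scope R_scope.

Theorem proposition3p3 (beta lam L x z wD wE : R) :
  0 < beta -> 0 < lam <= 1 -> 0 <= L -> 0 <= x -> 0 <= z ->
  0 <= wD -> 0 <= wE -> wD + wE = 1 ->
  (lam * (x + z) - beta * L * wD) ^ 2 < 4 * beta * lam * L * x * wE ->
  ~ (exists Delta : R, - wE * L < Delta /\
       beta * (L + Delta) <= lam * (z + Delta * pD x (- wE * L) Delta)).
Proof.
  intros Hb Hl HL Hx Hz HwD HwE Hw Hdisc [D [HD Hc]].
  unfold pD in Hc.
  set (d := D - - wE * L) in *.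
  assert (Hd : 0 < d) by (unfold d; lra).
  assert (E : D * (x / d) = x + x * (- wE * L) / d).
  { unfold d; field; unfold d in Hd; lra. }
  rewrite E in Hc.
  assert (Hc2 : beta * (L + D) * d <= lam * (z + (x + x * (- wE * L) / d)) * d)
    by (apply Rmult_le_compat_r; lra).
  assert (E2 : lam * (z + (x + x * (- wE * L) / d)) * d
               = lam * (z + x) * d + lam * x * (- wE * L)) by (field; lra).
  rewrite E2 in Hc2.
  assert (HD' : D = d - wE * L) by (unfold d; lra).
  rewrite HD' in Hc2.
  assert (HwD' : wD = 1 - wE) by lra.
  rewrite HwD' in Hdisc.
  assert (Hsq : 0 <= (2 * beta * d + (beta * L * (1 - wE) - lam * (x + z))) ^ 2)
    by apply pow2_ge_0.
  nra.
Qed.
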